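(* Let $L$ be a Lie algebra over a field $k$ generated by its pure extremal elements, let $x,y\in E$ with $g(x,y)=1$ and let $L=\bigoplus_{i=-2}^2L_i$ be the associated $5$-grading. Let $\varphi=\exp(y)\exp(x)\exp(y)$. Then $\varphi(x)=y$, $\varphi(y)=x$, $\varphi(l_{-1})=[y,l_{-1}]$, $\varphi(l_0)=l_0+[x,[y,l_0]]$ and $\varphi(l_1)=[x,l_1]$ for all $l_{-1}\in L_{-1}$, $l_0\in L_0$, $l_1\in L_1$.
   Context: A nonzero $a\in L$ is extremal if there is $g_a\colon L\to k$ with $[a,[a,u]]=2g_a(u)a$, $[[a,u],[a,w]]=g_a([u,w])a+g_a(w)[a,u]-g_a(u)[a,w]$, $[a,[u,[a,w]]]=g_a([u,w])a-g_a(w)[a,u]-g_a(u)[a,w]$ for all $u,w$; sandwiches satisfy $[a,[a,u]]=0=[a,[u,[a,w]]]$ (and then $g_a=0$ by convention); pure = non-sandwich; $E$ = set of extremal elements; $g$ = unique symmetric bilinear form with $g(a,u)=g_a(u)$ for $a\in E$. $\exp(a)(u)=u+[a,u]+g_a(u)a$. The $5$-grading associated with $x,y$: $L_{-2}=kx$, $L_{-1}=[x,U]$, $L_0=\{l:[x,l]\in kx,[y,l]\in ky\}$, $L_1=[y,U]$, $L_2=ky$, $U=\{u:g(u,x)=g(u,y)=g(u,[x,y])=0\}$. *)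

(* Defs.v *)
From HB Require Import structures.
From mathcomp Require Import all_boot all_algebra.
Set Implicit Arguments. Unset Strict Implicit. Unset Printing Implicit Defensive.
Import GRing.Theory.
Local Open Scope ring_scope.

Definition is_lie_bracket (k : fieldType) (L : lmodType k) (br : L -> L -> L) :=
  [/\ (forall (c : k) u v w, br (c *: u + v) w = c *: br u w + br v w),
      (forall (c : k) u v w, br w (c *: u + v) = c *: br w u + br w v),
      (forall u, br u u = 0) &
      (forall u v w, br u (br v w) + br v (br w u) + br w (br u v) = 0)].

Definition is_sym_bilinear (k : fieldType) (L : lmodType k) (g : L -> L -> k) :=
  [/\ (forall (c : k) u v w, g (c *: u + v) w = c * g u w + g v w),
      (forall (c : k) u v w, g w (c *: u + v) = c * g w u + g w v) &
      (forall u v, g u v = g v u)].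

Section Extremal.
Variables (k : fieldType) (L : lmodType k) (br : L -> L -> L).

Definition extremal_with (a : L) (ga : L -> k) :=
  a != 0 /\
  forall u w,
  [/\ br a (br a u) = (2 * ga u) *: a,
      br (br a u) (br a w) = ga (br u w) *: a + ga w *: br a u - ga u *: br a w &
      br a (br u (br a w)) = ga (br u w) *: a - ga w *: br a u - ga u *: br a w].

Definition extremal (a : L) := exists ga, extremal_with a ga.

Definition sandwich (a : L) :=
  forall u w, br a (br a u) = 0 /\ br a (br u (br a w)) = 0.

Definition pure_extremal (a : L) := extremal a /\ ~ sandwich a.

Definition lie_generated_by (A : L -> Prop) :=
  forall P : L -> Prop,
    P 0 -> (forall (c : k) u v, P u -> P v -> P (c *: u + v)) ->
    (forall u v, P u -> P v -> P (br u v)) ->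
    (forall a, A a -> P a) -> forall u, P u.

Definition is_extremal_form (g : L -> L -> k) :=
  is_sym_bilinear g /\
  forall a, extremal a -> extremal_with a (g a) /\ (sandwich a -> forall u, g a u = 0).

Definition lexp (g : L -> L -> k) (a u : L) : L := u + br a u + g a u *: a.

Definition gradU (g : L -> L -> k) (x y u : L) :=
  g u x = 0 /\ g u y = 0 /\ g u (br x y) = 0.
Definition grad_m1 g (x y l : L) := exists u, gradU g x y u /\ l = br x u.
Definition grad_0 (x y l : L) :=
  (exists c : k, br x l = c *: x) /\ (exists c : k, br y l = c *: y).
Definition grad_1 g (x y l : L) := exists u, gradU g x y u /\ l = br y u.

End Extremal.

(* Main.v *)
Require Import Defs.
From HB Require Import structures.
From mathcomp Require Import all_boot all_algebra.
From mathcomp Require Import ring.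
Import GRing.Theory.
Local Open Scope ring_scope.

Section Lin.
Variables (k : fieldType) (L : lmodType k).

Inductive vexp := VAtom of nat | VZero | VAdd of vexp & vexp | VOpp of vexp | VScale of k & vexp.

Fixpoint ev (vs : seq L) (e : vexp) : L :=
  match e with
  | VAtom n => nth 0 vs n
  | VZero => 0
  | VAdd a b => ev vs a + ev vs b
  | VOpp a => - ev vs a
  | VScale c a => c *: ev vs a
  end.

Fixpoint cf (e : vexp) (i : nat) : k :=
  match e with
  | VAtom n => if eqn n i then 1 else 0
  | VZero => 0
  | VAdd a b => cf a i + cf b i
  | VOpp a => - cf a i
  | VScale c a => c * cf a i
  end.

Lemma ev_cf vs e : ev vs e = \sum_(i < size vs) cf e i *: nth 0 vs i.
Proof.
elim: e => [n||a IHa b IHb|a IHa|c a IHa] /=.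
- case: (ltnP n (size vs)) => Hn.
  + rewrite (bigD1 (Ordinal Hn) isT) /= eqnE eqxx scale1r big1 ?addr0 //.
    move=> i Hi; case: eqP => [E|NE]; last by rewrite scale0r.
    have Ei : i = Ordinal Hn by apply: val_inj; rewrite /= E.
    by move: Hi; rewrite Ei eqxx.
  + rewrite nth_default // big1 // => i _.
    rewrite eqnE; case: eqP => [E|]; last by rewrite scale0r.
    by move: (ltn_ord i); rewrite -E ltnNge Hn.
- by rewrite big1 // => i _; rewrite scale0r.
- by rewrite IHa IHb -big_split /=; apply: eq_bigr => i _; rewrite scalerDl.
- by rewrite IHa -sumrN; apply: eq_bigr => i _; rewrite scaleNr.
- by rewrite IHa scaler_sumr; apply: eq_bigr => i _; rewrite scalerA.
Qed.

Fixpoint allbelow (n : nat) (P : nat -> Prop) : Prop :=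
  match n with 0 => True | S m => P m /\ allbelow m P end.

Lemma allbelowP n P : allbelow n P -> forall i, (i < n)%N -> P i.
Proof.
elim: n => [|n IH] //= [H1 H2] i; rewrite ltnS leq_eqVlt => /orP [/eqP->//|]; exact: IH.
Qed.

Lemma norm_eq vs e1 e2 :
  allbelow (size vs) (fun i => cf e1 i = cf e2 i) -> ev vs e1 = ev vs e2.
Proof.
move/allbelowP => H; rewrite !ev_cf; apply: eq_bigr => i _; by rewrite H.
Qed.
End Lin.
Arguments VAtom {k}. Arguments VZero {k}. Arguments VAdd {k}. Arguments VOpp {k}. Arguments VScale {k}.
Arguments ev {k L}. Arguments cf {k}. Arguments norm_eq {k L}. Arguments allbelow : clear implicits.

Ltac lookup x l :=
  lazymatch l with
  | cons x _ => constr:(0%N)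
  | cons _ ?t => let n := lookup x t in constr:(S n)
  end.

Ltac mem x l :=
  lazymatch l with
  | nil => constr:(false)
  | cons x _ => constr:(true)
  | cons _ ?t => mem x t
  | rcons _ x => constr:(true)
  | rcons ?t _ => mem x t
  end.

Ltac add_atom x l :=
  let b := mem x l in
  lazymatch b with
  | true => l
  | false => constr:(rcons l x)
  end.

Ltac atoms t l :=
  match t with
  | ?a + ?b => let l1 := atoms a l in atoms b l1
  | - ?a => atoms a l
  | ?c *: ?a => atoms a l
  | 0 => l
  | _ => add_atom t l
  end.

Ltac reify K t l :=
  match t with
  | ?a + ?b => let ea := reify K a l in let eb := reify K b l in constr:(VAdd ea eb)
  | - ?a => let ea := reify K a l in constr:(VOpp ea)
  | ?c *: ?a => let ea := reify K a l in constr:(VScale c ea)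
  | 0 => constr:(@VZero K)
  | _ => let n := lookup t l in constr:(@VAtom K n)
  end.

Ltac lin K :=
  match goal with
  | |- @eq ?T ?A ?B =>
    let l0 := constr:(@nil T) in
    let l1 := atoms A l0 in
    let l2 := atoms B l1 in
    let l := eval simpl in l2 in
    let ea := reify K A l in
    let eb := reify K B l in
    change (ev l ea = ev l eb); apply: norm_eq; cbn -[GRing.add GRing.mul GRing.opp GRing.zero GRing.one]; repeat split; ring
  end.


Section Main.
Variables (k : fieldType) (L : lmodType k) (br : L -> L -> L) (g : L -> L -> k).
Hypothesis HL : is_lie_bracket br.
Hypothesis Hg : is_extremal_form br g.

Lemma double0 (v : L) : v = v + v -> v = 0.
Proof. by move=> E; have := congr1 (fun t => t - v) E; rewrite /= subrr addrK => /esym. Qed.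
Lemma double0k (v : k) : v = v + v -> v = 0.
Proof. by move=> E; have := congr1 (fun t => t - v) E; rewrite /= subrr addrK => /esym. Qed.

Lemma br0l w : br 0 w = 0.
Proof.
case: HL => H _ _ _; have := H 1 0 0 w; rewrite !scale1r !addr0; exact: double0.
Qed.
Lemma br0r w : br w 0 = 0.
Proof.
case: HL => _ H _ _; have := H 1 0 0 w; rewrite !scale1r !addr0; exact: double0.
Qed.
Lemma brDl u v w : br (u + v) w = br u w + br v w.
Proof. case: HL => H _ _ _; by rewrite -[u]scale1r H !scale1r. Qed.
Lemma brDr u v w : br w (u + v) = br w u + br w v.
Proof. case: HL => _ H _ _; by rewrite -[u]scale1r H !scale1r. Qed.
Lemma brZl c u w : br (c *: u) w = c *: br u w.
Proof. case: HL => H _ _ _; by rewrite -[c *: u]addr0 H br0l addr0. Qed.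
Lemma brZr c u w : br w (c *: u) = c *: br w u.
Proof. case: HL => _ H _ _; by rewrite -[c *: u]addr0 H br0r addr0. Qed.
Lemma brNl u w : br (- u) w = - br u w.
Proof. by rewrite -scaleN1r brZl scaleN1r. Qed.
Lemma brNr u w : br w (- u) = - br w u.
Proof. by rewrite -scaleN1r brZr scaleN1r. Qed.
Lemma brxx u : br u u = 0.
Proof. by case: HL. Qed.
Lemma br_anti u v : br u v = - br v u.
Proof.
have := brxx (u + v); rewrite brDl !brDr !brxx add0r addr0 => /eqP.
by rewrite addr_eq0 => /eqP.
Qed.
Lemma br_der a u w : br a (br u w) = br (br a u) w + br u (br a w).
Proof.
case: HL => _ _ _ J.
have -> : br a (br u w) = - (br u (br w a) + br w (br a u)).
  by apply/eqP; rewrite -addr_eq0 addrA J.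
rewrite opprD (br_anti w (br a u)) (br_anti w a) brNr.
lin k.
Qed.

Lemma g0l w : g 0 w = 0.
Proof.
case: Hg => [[H _ _] _]; have := H 1 0 0 w; rewrite !scale1r !addr0 mul1r; exact: double0k.
Qed.
Lemma gC u v : g u v = g v u.
Proof. by case: Hg => [[_ _ H] _]. Qed.
Lemma g0r w : g w 0 = 0.
Proof. by rewrite gC g0l. Qed.
Lemma gDl u v w : g (u + v) w = g u w + g v w.
Proof. case: Hg => [[H _ _] _]; by rewrite -[u]scale1r H !scale1r mul1r. Qed.
Lemma gDr u v w : g w (u + v) = g w u + g w v.
Proof. by rewrite gC gDl gC (gC v). Qed.
Lemma gZl c u w : g (c *: u) w = c * g u w.
Proof. case: Hg => [[H _ _] _]; by rewrite -[c *: u]addr0 H g0l addr0. Qed.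
Lemma gZr c u w : g w (c *: u) = c * g w u.
Proof. by rewrite gC gZl gC. Qed.
Lemma gNl u w : g (- u) w = - g u w.
Proof. by rewrite -scaleN1r gZl mulN1r. Qed.
Lemma gNr u w : g w (- u) = - g w u.
Proof. by rewrite -scaleN1r gZr mulN1r. Qed.

Definition ext := extremal br.

Lemma extF a : ext a -> extremal_with br a (g a).
Proof. by move=> H; case: Hg => _ /(_ a H) []. Qed.
Lemma ext_sand a : ext a -> sandwich br a -> forall u, g a u = 0.
Proof. by move=> H; case: Hg => _ /(_ a H) []. Qed.
Lemma ext_neq0 a : ext a -> a != 0.
Proof. by move/extF => []. Qed.
Lemma E1 a u : ext a -> br a (br a u) = (2 * g a u) *: a.
Proof. by move/extF => [_ /(_ u u) []]. Qed.
Lemma E2 a u w : ext a ->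
  br (br a u) (br a w) = g a (br u w) *: a + g a w *: br a u - g a u *: br a w.
Proof. by move/extF => [_ /(_ u w) []]. Qed.
Lemma E3 a u w : ext a ->
  br a (br u (br a w)) = g a (br u w) *: a - g a w *: br a u - g a u *: br a w.
Proof. by move/extF => [_ /(_ u w) []]. Qed.

Lemma line_g0 a : ext a -> (forall u, exists c, br a u = c *: a) -> forall u, g a u = 0.
Proof.
move=> Ea H; apply: ext_sand => // u w; split.
  by have [c ->] := H u; rewrite brZr brxx scaler0.
have [c ->] := H w; rewrite !brZr (br_anti u) brNr.
have [d ->] := H u; by rewrite brZr brxx scaler0 oppr0 scaler0.
Qed.

Lemma g_aa a : ext a -> g a a = 0.
Proof.
move=> Ea; case: (eqVneq (g a a) 0) => // Hn.
have H : forall u, exists c, br a u = c *: a.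
  move=> u; exists (g a (br a u) / g a a).
  have := E2 a a u Ea; rewrite brxx br0l scaler0 addr0 => /eqP; rewrite eq_sym subr_eq0 => /eqP.
  move=> E; by rewrite mulrC -scalerA E scalerA mulVf // scale1r.
by rewrite (line_g0 _ Ea H) eqxx in Hn.
Qed.

Lemma g_a_aw a w : ext a -> g a (br a w) = 0.
Proof.
move=> Ea; have := E2 a a w Ea; rewrite brxx br0l (g_aa _ Ea) scale0r subr0 scaler0 addr0.
move=> /esym /eqP; rewrite scaler_eq0 (negbTE (ext_neq0 _ Ea)) orbF.
by move/eqP.
Qed.


Lemma use_eq (c : k) (P Q A B : L) : P = Q -> A - B = c *: (P - Q) -> A = B.
Proof. by move=> -> /eqP; rewrite subrr scaler0 subr_eq0 => /eqP. Qed.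
Arguments use_eq c {P Q A B}.

Lemma comm_g0 a b u : ext a -> br a b = 0 -> g a (br b u) = 0.
Proof.
move=> Ea Hab.
have Hk : forall u, g a (br b u) *: a = g a b *: br a u.
  move=> v; have := E3 a b v Ea.
  rewrite br_der Hab br0l add0r E1 // brZr (br_anti b a) Hab oppr0 !scaler0.
  move=> E; apply: (use_eq (-1) E); lin k.
case: (eqVneq (g a b) 0) => Hb.
  have := Hk u; rewrite Hb scale0r => /eqP; rewrite scaler_eq0 (negbTE (ext_neq0 _ Ea)) orbF.
  by move/eqP.
have H : forall v, exists c, br a v = c *: a.
  move=> v; exists (g a (br b v) / g a b).
  by rewrite mulrC -scalerA Hk scalerA mulVf // scale1r.
by rewrite (line_g0 _ Ea H) eqxx in Hb.
Qed.

Lemma Fab a b u : ext a -> ext b -> g a (br b u) + g b (br a u) = 0.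
Proof.
move=> Ea Eb.
case: (eqVneq (br a b) 0) => Hab.
  rewrite (comm_g0 _ _ _ Ea Hab) (comm_g0 _ _ _ Eb) ?addr0 //.
  by rewrite br_anti Hab oppr0.
have Hba : br b a != 0 by rewrite br_anti oppr_eq0.
have h1 := congr1 (br b) (E3 a b u Ea).
have h2 := E3 b a (br a u) Eb.
rewrite h2 !brDr !brNr !brZr (br_anti a b) brNr (E1 b a Eb) E1 // gZr (gC b a) in h1.
have : (g a (br b u) + g b (br a u)) *: br b a = 0.
  apply: (use_eq (-1) h1); lin k.
by move/eqP; rewrite scaler_eq0 (negbTE Hba) orbF => /eqP.
Qed.

Definition ex a u := lexp br g a u.

Lemma ex_hom a u w : ext a -> ex a (br u w) = br (ex a u) (ex a w).
Proof.
move=> Ea; rewrite /ex /lexp !brDl !brDr !brZl !brZr (br_der a u w).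
rewrite (br_anti u a) (br_anti (br a u) a) ?brNr ?brNl (E1 a u Ea) (E1 a w Ea) (E2 a u w Ea) brxx.
lin k.
Qed.

Lemma ext_opp a : ext a -> ext (- a).
Proof.
move=> Ea; exists (fun u => - g a u); split; first by rewrite oppr_eq0 ext_neq0.
move=> u w; rewrite !(brNl, brNr) ?opprK (E1 a u Ea) (E2 a u w Ea) (E3 a u w Ea).
split; lin k.
Qed.

Lemma ex_inv a u : ext a -> ex a (ex (- a) u) = u.
Proof.
move=> Ea; rewrite /ex /lexp !brDr !brZr !brNl !brNr !gDr !gZr !gNl !gNr brxx (E1 a u Ea) (g_aa _ Ea) (g_a_aw _ _ Ea).
lin k.
Qed.

Lemma ex_inv' a u : ext a -> ex (- a) (ex a u) = u.
Proof. by move=> Ea; have := ex_inv (- a) u (ext_opp _ Ea); rewrite opprK. Qed.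

Lemma exD a u v : ex a (u + v) = ex a u + ex a v.
Proof. rewrite /ex /lexp brDr gDr; lin k. Qed.
Lemma exZ a c u : ex a (c *: u) = c *: ex a u.
Proof. rewrite /ex /lexp brZr gZr; lin k. Qed.
Lemma exN a u : ex a (- u) = - ex a u.
Proof. rewrite /ex /lexp brNr gNr; lin k. Qed.
Lemma ex0 a : ex a 0 = 0.
Proof. by rewrite /ex /lexp br0r g0r scale0r !addr0. Qed.

Lemma ex_ext a b : ext a -> ext b -> ext (ex a b).
Proof.
move=> Ea Eb; exists (fun u => g b (ex (- a) u)); split.
  apply/eqP => H0; have := ex_inv' a b Ea; rewrite H0 ex0 => Hb.
  by move: (ext_neq0 _ Eb); rewrite -Hb eqxx.
move=> u w.
have [u' ->] : exists u', u = ex a u' by exists (ex (- a) u); rewrite ex_inv.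
have [w' ->] : exists w', w = ex a w' by exists (ex (- a) w); rewrite ex_inv.
rewrite -!(ex_hom _ _ _ Ea) !(ex_inv' _ _ Ea) (E1 b u' Eb) (E2 b u' w' Eb) (E3 b u' w' Eb).
by rewrite !exD !exN !exZ.
Qed.

Lemma br_ex a b : br a b = ex a b - b - g a b *: a.
Proof. rewrite /ex /lexp; lin k. Qed.

Definition Sp v := forall P : L -> Prop, P 0 -> (forall c u v, P u -> P v -> P (c *: u + v)) ->
  (forall e, ext e -> P e) -> P v.

Lemma Sp0 : Sp 0. Proof. by move=> P. Qed.
Lemma Sp_lin c u v : Sp u -> Sp v -> Sp (c *: u + v).
Proof. move=> Hu Hv P P0 Pl Pe; exact: (Pl c u v (Hu P P0 Pl Pe) (Hv P P0 Pl Pe)). Qed.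
Lemma Sp_e e : ext e -> Sp e.
Proof. by move=> He P P0 Pl Pe; apply: Pe. Qed.
Lemma SpD u v : Sp u -> Sp v -> Sp (u + v).
Proof. by move=> Hu Hv; rewrite -[u]scale1r; apply: Sp_lin. Qed.
Lemma SpZ c u : Sp u -> Sp (c *: u).
Proof. by move=> Hu; rewrite -[c *: u]addr0; apply: Sp_lin => //; apply: Sp0. Qed.
Lemma SpN u : Sp u -> Sp (- u).
Proof. by move=> Hu; rewrite -scaleN1r; apply: SpZ. Qed.

Lemma Sp_br_ee a b : ext a -> ext b -> Sp (br a b).
Proof.
move=> Ea Eb; rewrite br_ex; apply: SpD; [apply: SpD|apply: SpN; apply: SpZ].
- exact: Sp_e (ex_ext _ _ Ea Eb).
- by apply: SpN; apply: Sp_e.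
- exact: Sp_e.
Qed.

Lemma Sp_br_e a v : ext a -> Sp v -> Sp (br a v).
Proof.
move=> Ea Hv; apply: (Hv (fun v => Sp (br a v))).
- by rewrite br0r; apply: Sp0.
- by move=> c u w Hu Hw; rewrite brDr brZr; apply: Sp_lin.
- by move=> e Ee; apply: Sp_br_ee.
Qed.

Lemma Sp_br u v : Sp u -> Sp v -> Sp (br u v).
Proof.
move=> Hu; move: v; apply: (Hu (fun u => forall v, Sp v -> Sp (br u v))).
- by move=> v0 _; rewrite br0l; apply: Sp0.
- by move=> c u1 u2 H1 H2 v0 Hv; rewrite brDl brZl; apply: Sp_lin; [apply: H1|apply: H2].
- by move=> e Ee v0 Hv; apply: Sp_br_e.
Qed.

Hypothesis Hgen : lie_generated_by br (pure_extremal br).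

Lemma Sp_all v : Sp v.
Proof.
apply: (Hgen Sp).
- exact: Sp0.
- by move=> c u w; apply: Sp_lin.
- by move=> u w; apply: Sp_br.
- by move=> a [Ea _]; apply: Sp_e.
Qed.

Lemma antisym u v w : g u (br v w) = - g v (br u w).
Proof.
have step1 : forall b, ext b -> forall u, g u (br b w) = - g b (br u w).
  move=> b Eb u0; apply: (Sp_all u0 (fun u => g u (br b w) = - g b (br u w))).
  - by rewrite g0l br0l g0r oppr0.
  - by move=> c u1 u2 H1 H2; rewrite gDl gZl brDl brZl gDr gZr H1 H2; ring.
  - by move=> e Ee; apply/eqP; rewrite -addr_eq0 Fab.
move: u; apply: (Sp_all v (fun v => forall u, g u (br v w) = - g v (br u w))).
- by move=> u; rewrite br0l g0r g0l oppr0.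
- by move=> c v1 v2 H1 H2 u; rewrite brDl brZl gDr gZr gDl gZl H1 H2; ring.
- by move=> e Ee u; apply: step1.
Qed.


Lemma main_sec x y : ext x -> ext y -> g x y = 1 ->
  let phi := fun l => lexp br g y (lexp br g x (lexp br g y l)) in
  [/\ phi x = y, phi y = x,
      (forall l, grad_m1 br g x y l -> phi l = br y l),
      (forall l, grad_0 br x y l -> phi l = l + br x (br y l)) &
      (forall l, grad_1 br g x y l -> phi l = br x l)].
Proof.
move=> Ex Ey gxy phi.
have gyx : g y x = 1 by rewrite gC.
have gxx := g_aa _ Ex; have gyy := g_aa _ Ey.
have gxxw := fun w => g_a_aw _ w Ex.
have gyyw := fun w => g_a_aw _ w Ey.
have Hxy : br x y != 0.
  apply/eqP => H0.
  have Hl : forall u, exists c, br x u = c *: x.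
    move=> u; exists (g x (br y u)); have := E3 x y u Ex.
    rewrite br_der H0 br0l add0r (E1 x u Ex) brZr (br_anti y x) H0 oppr0 !scaler0 gxy => E.
    apply: (use_eq 1 E); lin k.
  have := line_g0 _ Ex Hl y; rewrite gxy => /eqP; by rewrite oner_eq0.
have Hyx : br y x != 0 by rewrite br_anti oppr_eq0.
have s3 : lexp br g y y = y by rewrite /lexp brxx gyy scale0r !addr0.
split.
- have s1 : lexp br g y x = x - br x y + y by rewrite /lexp gyx scale1r (br_anti y x).
  have s2 : lexp br g x (x - br x y + y) = y.
    rewrite /lexp !brDr brNr brxx (E1 x y Ex) !gDr gNr gxx gxxw gxy; lin k.
  by rewrite /phi /= s1 s2 s3.
- have t2 : lexp br g x y = y + br x y + x by rewrite /lexp gxy scale1r.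
  have t3 : lexp br g y (y + br x y + x) = x.
    rewrite /lexp (br_anti x y) !brDr !brNr brxx (E1 y x Ey) !gDr !gNr gyy gyyw gyx; lin k.
  by rewrite /phi /= s3 t2 t3.
- move=> l [u [[gux [guy guxy]] ->]].
  have gxu : g x u = 0 by rewrite gC.
  have gyu : g y u = 0 by rewrite gC.
  have gam : g x (br y u) = 0.
    by have := antisym u x y; rewrite guxy (br_anti u y) gNr opprK => /esym.
  have bet : g y (br x u) = 0 by rewrite antisym gam oppr0.
  have del : g x (br y (br x u)) = 0.
    by rewrite antisym (E1 x u Ex) gZr gxu mulr0 mul0r oppr0.
  have s1 : lexp br g y (br x u) = br x u + br y (br x u) by rewrite /lexp bet scale0r addr0.
  have s2 : lexp br g x (br x u + br y (br x u)) = br y (br x u).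
    rewrite /lexp !brDr (E1 x u Ex) (E3 x y u Ex) !gDr gxxw del gam gxu gxy; lin k.
  have s3' : lexp br g y (br y (br x u)) = br y (br x u).
    rewrite /lexp (E1 y (br x u) Ey) gyyw bet; lin k.
  by rewrite /phi /= s1 s2 s3'.
- move=> l [[c Hc] [d Hd]].
  have hdc : d = - c.
    by have := antisym x y l; rewrite Hd Hc !gZr gxy gyx !mulr1.
  have gf : g x l = 0.
    have := E3 x y l Ex; rewrite Hc !brZr (br_anti y x) brNr (E1 x y Ex) Hd gZr gxy hdc => E.
    have : g x l *: br x y = 0 by apply: (use_eq 1 E); lin k.
    by move/eqP; rewrite scaler_eq0 (negbTE Hxy) orbF => /eqP.
  have ge : g y l = 0.
    have := E3 y x l Ey; rewrite Hd !brZr (br_anti x y) brNr (E1 y x Ey) Hc gZr gyx hdc => E.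
    have : g y l *: br y x = 0 by apply: (use_eq 1 E); lin k.
    by move/eqP; rewrite scaler_eq0 (negbTE Hyx) orbF => /eqP.
  have s1 : lexp br g y l = l + d *: y by rewrite /lexp Hd ge scale0r addr0.
  have s2 : lexp br g x (l + d *: y) = l + d *: y + d *: br x y.
    rewrite /lexp brDr brZr Hc !gDr gZr gf gxy hdc; lin k.
  have s3' : lexp br g y (l + d *: y + d *: br x y) = l + d *: br x y.
    rewrite /lexp (br_anti x y) !brDr !brZr Hd brxx brNr (E1 y x Ey) !gDr !gZr gNr gyy gyyw ge gyx; lin k.
  by rewrite /phi /= s1 s2 s3' Hd brZr.
- move=> l [u [[gux [guy guxy]] ->]].
  have gxu : g x u = 0 by rewrite gC.
  have gyu : g y u = 0 by rewrite gC.
  have gam : g x (br y u) = 0.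
    by have := antisym u x y; rewrite guxy (br_anti u y) gNr opprK => /esym.
  have bet : g y (br x u) = 0 by rewrite antisym gam oppr0.
  have eps : g y (br x (br y u)) = 0.
    by rewrite antisym (E1 y u Ey) gZr gyu mulr0 mul0r oppr0.
  have s1 : lexp br g y (br y u) = br y u.
    rewrite /lexp (E1 y u Ey) gyyw gyu; lin k.
  have s2 : lexp br g x (br y u) = br y u + br x (br y u) by rewrite /lexp gam scale0r addr0.
  have s3' : lexp br g y (br y u + br x (br y u)) = br x (br y u).
    rewrite /lexp !brDr (E1 y u Ey) (E3 y x u Ey) !gDr gyyw eps bet gyu gyx; lin k.
  by rewrite /phi /= s1 s2 s3'.
Qed.

End Main.

Theorem lemma2p8 (k : fieldType) (L : lmodType k) (br : L -> L -> L)
  (g : L -> L -> k) (x y : L) :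
  is_lie_bracket br ->
  lie_generated_by br (pure_extremal br) ->
  is_extremal_form br g ->
  extremal br x -> extremal br y -> g x y = 1 ->
  let phi := fun l => lexp br g y (lexp br g x (lexp br g y l)) in
  [/\ phi x = y, phi y = x,
      (forall l, grad_m1 br g x y l -> phi l = br y l),
      (forall l, grad_0 br x y l -> phi l = l + br x (br y l)) &
      (forall l, grad_1 br g x y l -> phi l = br x l)].
Proof.
move=> HL Hgen Hg Ex Ey gxy; exact: (@main_sec k L br g HL Hg Hgen x y Ex Ey gxy).
Qed.
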